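(* Let $\mathfrak l$ be a real nilpotent Lie algebra with $\dim\mathfrak l=5$ and let $\mathfrak a=0$. If $\mathcal H^2_Q(\mathfrak l,\mathfrak a)_0\neq\emptyset$, then $\mathfrak l\cong\mathbb R^5$ or $\mathfrak l\cong\mathfrak g_{5,2}$.
   Context: $\mathfrak g_{5,2}$ has basis $X_1,X_2,X_3,Y,Z$ with $[X_1,X_2]=Y$, $[X_1,X_3]=Z$, other brackets of basis vectors zero; $\mathbb R^5$ is abelian. For a Lie algebra $\mathfrak l$: $\mathfrak l^1=\mathfrak l$, $\mathfrak l^{k+1}=[\mathfrak l,\mathfrak l^k]$, $\mathfrak z(\mathfrak l)$ the centre. For a pseudo-Euclidean space $\mathfrak a$ regarded as trivial $\mathfrak l$-module: $C^p(\mathfrak l,\mathfrak a)$ alternating $p$-linear maps with Chevalley–Eilenberg differential $d$, $C^p(\mathfrak l)=C^p(\mathfrak l,\mathbb R)$, $\langle\alpha\wedge\beta\rangle$ the wedge product followed by contraction with the inner product. $\mathcal Z^2_Q(\mathfrak l,\mathfrak a)=\{(\alpha,\gamma)\in C^2(\mathfrak l,\mathfrak a)\oplus C^3(\mathfrak l): d\alpha=0,d\gamma=\frac12\langle\alpha\wedge\alpha\rangle\}$; the group $C^1(\mathfrak l,\mathfrak a)\oplus C^2(\mathfrak l)$ with $(\tau_1,\sigma_1)*(\tau_2,\sigma_2)=(\tau_1+\tau_2,\sigma_1+\sigma_2+\frac12\langle\tau_1\wedge\tau_2\rangle)$ acts by $(\alpha,\gamma)(\tau,\sigma)=(\alpha+d\tau,\gamma+d\sigma+\langle(\alpha+\frac12d\tau)\wedge\tau\rangle)$;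 $\mathcal H^2_Q(\mathfrak l,\mathfrak a)$ is the orbit set (for $\mathfrak a=0$ it is $H^3(\mathfrak l)$). Admissibility (trivial $\mathfrak a$): with $\mathfrak l^{m+2}=0$, $\mathfrak l_{(0)}=\mathfrak z(\mathfrak l)$, $\mathfrak l_{(k)}=\mathfrak z(\mathfrak l)\cap\mathfrak l^{k+1}$ ($k\ge1$), a class $[\alpha,\gamma]$ is admissible iff for all $0\le k\le m$: $(A_k)$ whenever $L_0\in\mathfrak l_{(k)}$ and there are $A_0\in\mathfrak a$, $Z_0\in(\mathfrak l^{k+1})^*$ with $\alpha(L,L_0)=0$ and $\gamma(L,L_0,\cdot)=-\langle A_0,\alpha(L,\cdot)\rangle+\langle Z_0,[L,\cdot]\rangle$ on $\mathfrak l^{k+1}$ for all $L$, then $L_0=0$; $(B_k)$ $\alpha$ applied to the kernel of the bracket map $\mathfrak l\otimes\mathfrak l^{k+1}\to\mathfrak l$ is a nondegenerate subspace of $\mathfrak a$. A class $\varphi$ is decomposable if there are decompositions $\mathfrak a=\mathfrak a_1\oplus\mathfrak a_2$ (orthogonal, into nondegenerate subspaces) and $\mathfrak l=\mathfrak l_1\oplus\mathfrak l_2$ (Lie algebra direct sum), at least one non-trivial, and classes $\varphi_i\in\mathcal H^2_Q(\mathfrak l_i,\mathfrak a_i)$ with $\varphi=(q_1,j_1)^*\varphi_1+(q_2,j_2)^*\varphi_2$, where $q_i:\mathfrak l\to\mathfrak l_i$ are projections, $j_i:\mathfrak a_i\to\mathfrak a$ inclusions, and $(q,j)^*(\alpha,\gamma)=(j\circ\alpha\circ(q\times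 q),\gamma\circ(q\times q\times q))$ (sums taken on representatives componentwise). $\mathcal H^2_Q(\mathfrak l,\mathfrak a)_0$ is the set of admissible indecomposable classes. *)

(* Defs.v *)
From HB Require Import structures.
From mathcomp Require Import all_boot all_order all_algebra.
From mathcomp Require Import reals.
Set Implicit Arguments. Unset Strict Implicit. Unset Printing Implicit Defensive.
Import Order.TTheory GRing.Theory Num.Theory.
Local Open Scope ring_scope.

Section LieDefs.
Variable R : realType.

Definition is_lin (V W : lmodType R) (f : V -> W) :=
  forall (a : R) x y, f (a *: x + y) = a *: f x + f y.

Variable V : vectType R.
Variable br : V -> V -> V.

Definition lie_algebra :=
  [/\ forall a x y z, br (a *: x + y) z = a *: br x z + br y z,
      forall a x y z, br x (a *: y + z) = a *: br x y + br x z,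
      forall x, br x x = 0 &
      forall x y z, br x (br y z) + br y (br z x) + br z (br x y) = 0].

(* lower central series: lcs 1 = l, lcs (k+1) = [l, lcs k] (lcs 0 := l) *)
Fixpoint lcs (k : nat) : {vspace V} :=
  match k with
  | 0 => fullv
  | k'.+1 => match k' with
             | 0 => fullv
             | _ => <<[seq br x y | x <- vbasis (fullv : {vspace V}),
                                    y <- vbasis (lcs k')]>>%VS
             end
  end.

Definition nilpotent := exists n, lcs n = 0%VS.

Definition central (x : V) := forall y, br x y = 0.

Definition form1 (f : V -> R) := forall a x y, f (a *: x + y) = a * f x + f y.

Definition form2 (s : V -> V -> R) :=
  [/\ forall a x y z, s (a *: x + y) z = a * s x z + s y z,
      forall a x y z, s x (a *: y + z) = a * s x y + s x z &
      forall x, s x x = 0].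

Definition form3 (g : V -> V -> V -> R) :=
  [/\ forall a x y z w, g (a *: x + y) z w = a * g x z w + g y z w,
      forall a x y z w, g x (a *: y + z) w = a * g x y w + g x z w,
      forall a x y z w, g x y (a *: z + w) = a * g x y z + g x y w &
      forall x y, g x x y = 0 /\ g x y x = 0 /\ g y x x = 0].

Definition d2 (s : V -> V -> R) (x0 x1 x2 : V) : R :=
  - s (br x0 x1) x2 + s (br x0 x2) x1 - s (br x1 x2) x0.

Definition d3 (g : V -> V -> V -> R) (x0 x1 x2 x3 : V) : R :=
  - g (br x0 x1) x2 x3 + g (br x0 x2) x1 x3 - g (br x0 x3) x1 x2
  - g (br x1 x2) x0 x3 + g (br x1 x3) x0 x2 - g (br x2 x3) x0 x1.

(* for a = 0, a quadratic cocycle (alpha, gamma) is (0, gamma) with gamma a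
   closed 3-form *)
Definition cocycle3 (g : V -> V -> V -> R) :=
  form3 g /\ forall x0 x1 x2 x3, d3 g x0 x1 x2 x3 = 0.

(* admissibility for a = 0: conditions (A_k); (B_k) hold trivially since
   alpha = 0 takes values in the zero space.  l_(k) = z(l) ∩ l^{k+1}
   (for k = 0 this is z(l) as l^1 = l). *)
Definition admissible (g : V -> V -> V -> R) :=
  forall (k : nat) (L0 : V),
    central L0 -> L0 \in lcs k.+1 ->
    (exists Z0 : V -> R, form1 Z0 /\
       forall L X, X \in lcs k.+1 -> g L L0 X = Z0 (br L X)) ->
    L0 = 0.

(* decomposability for a = 0: l = l1 ⊕ l2 a nontrivial Lie algebra direct
   sum (ideals U1, U2), closed 3-forms gamma_i on l_i, and
   [gamma] = q1^*[gamma1] + q2^*[gamma2] in H^3(l). *)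
Definition decomposable (g : V -> V -> V -> R) :=
  exists U1 U2 : {vspace V},
    [/\ U1 != 0%VS, U2 != 0%VS, (U1 :&: U2 = 0)%VS & (U1 + U2 = fullv)%VS] /\
    [/\ (forall x y, x \in U1 -> y \in U1 -> br x y \in U1),
        (forall x y, x \in U2 -> y \in U2 -> br x y \in U2) &
        (forall x y, x \in U1 -> y \in U2 -> br x y = 0)] /\
    exists g1 g2 : V -> V -> V -> R,
      [/\ form3 g1, form3 g2,
          (forall x0 x1 x2 x3, x0 \in U1 -> x1 \in U1 -> x2 \in U1 ->
             x3 \in U1 -> d3 g1 x0 x1 x2 x3 = 0),
          (forall x0 x1 x2 x3, x0 \in U2 -> x1 \in U2 -> x2 \in U2 ->
             x3 \in U2 -> d3 g2 x0 x1 x2 x3 = 0) &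
          exists s : V -> V -> R, form2 s /\
            forall x y z,
              g x y z = g1 (daddv_pi U1 U2 x) (daddv_pi U1 U2 y) (daddv_pi U1 U2 z)
                      + g2 (daddv_pi U2 U1 x) (daddv_pi U2 U1 y) (daddv_pi U2 U1 z)
                      + d2 s x y z].

End LieDefs.

Definition lie_iso (R : realType) (V W : vectType R)
  (brV : V -> V -> V) (brW : W -> W -> W) :=
  exists f : V -> W, [/\ is_lin f, bijective f &
                         forall x y, f (brV x y) = brW (f x) (f y)].

Definition abelian5_br (R : realType) (u v : 'rV[R]_5) : 'rV[R]_5 := 0.

(* g_{5,2}: basis X1,X2,X3,Y,Z = e_0,...,e_4 with [X1,X2]=Y, [X1,X3]=Z *)
Definition g52_br (R : realType) (u v : 'rV[R]_5) : 'rV[R]_5 :=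
  (u 0 0 * v 0 1 - u 0 1 * v 0 0) *: delta_mx 0 3
  + (u 0 0 * v 0 2 - u 0 2 * v 0 0) *: delta_mx 0 4.

(* Main.v *)
Require Import Defs.
From HB Require Import structures.
From mathcomp Require Import all_boot all_order all_algebra.
From mathcomp Require Import reals.
From Stdlib Require Import Classical.
From mathcomp Require Import zify.
Set Implicit Arguments. Unset Strict Implicit. Unset Printing Implicit Defensive.
Import Order.TTheory GRing.Theory Num.Theory.
Local Open Scope ring_scope.

Section Basics.
Variable R : realType.
Variable V : vectType R.
Variable br : V -> V -> V.
Hypothesis HL : lie_algebra br.
Let HL1 : forall a x y z, br (a *: x + y) z = a *: br x z + br y z.
Proof. by case: HL. Qed.
Let HL2 : forall a x y z, br x (a *: y + z) = a *: br x y + br x z.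
Proof. by case: HL. Qed.

Lemma brDl x y z : br (x + y) z = br x z + br y z.
Proof. by have := HL1 1 x y z; rewrite !scale1r. Qed.
Lemma brDr x y z : br x (y + z) = br x y + br x z.
Proof. by have := HL2 1 x y z; rewrite !scale1r. Qed.
Lemma br0l z : br 0 z = 0.
Proof. by have := brDl 0 0 z; rewrite addr0 => /(congr1 (fun v => v - br 0 z)); rewrite addrK subrr => <-. Qed.
Lemma br0r z : br z 0 = 0.
Proof. by have := brDr z 0 0; rewrite addr0 => /(congr1 (fun v => v - br z 0)); rewrite addrK subrr => <-. Qed.
Lemma brZl a x z : br (a *: x) z = a *: br x z.
Proof. by have := HL1 a x 0 z; rewrite br0l !addr0. Qed.
Lemma brZr a x z : br z (a *: x) = a *: br z x.
Proof. by have := HL2 a z x 0; rewrite br0r !addr0. Qed.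
Lemma brxx x : br x x = 0.
Proof. by case: HL => _ _ H _; apply: H. Qed.
Lemma brC x y : br x y = - br y x.
Proof.
have := brxx (x + y); rewrite brDl !brDr !brxx add0r addr0 => /eqP.
by rewrite addr_eq0 => /eqP.
Qed.
Lemma brNl x y : br (- x) y = - br x y.
Proof. by rewrite -scaleN1r brZl scaleN1r. Qed.
Lemma brNr x y : br y (- x) = - br y x.
Proof. by rewrite -scaleN1r brZr scaleN1r. Qed.
Lemma brBl x y z : br (x - y) z = br x z - br y z.
Proof. by rewrite brDl brNl. Qed.
Lemma brBr x y z : br z (x - y) = br z x - br z y.
Proof. by rewrite brDr brNr. Qed.


Lemma span_ind (s : seq V) (P : V -> Prop) :
  P 0 -> (forall a u v, P u -> P v -> P (a *: u + v)) ->
  (forall x, x \in s -> P x) -> forall v, v \in <<s>>%VS -> P v.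
Proof.
move=> P0 Pc Ps.
have PZ a u : P u -> P (a *: u) by move=> Pu; have := Pc a u 0 Pu P0; rewrite addr0.
move=> v /(@coord_span _ _ _ (in_tuple s)) ->.
apply: big_ind => //.
  by move=> u w Pu Pw; have := Pc 1 u w Pu Pw; rewrite scale1r.
move=> i _; apply: PZ.
by apply: Ps; apply: mem_nth; exact: (ltn_ord i).
Qed.

Definition spanbr (U : {vspace V}) :=
  <<[seq br x y | x <- vbasis (fullv : {vspace V}), y <- vbasis U]>>%VS.

Lemma mem_spanbr (U : {vspace V}) x y : y \in U -> br x y \in spanbr U.
Proof.
move=> yU.
have : x \in <<vbasis (fullv : {vspace V})>>%VS by rewrite (span_basis (vbasisP _)) memvf.
move: x; apply: span_ind.
- by rewrite br0l mem0v.
- by move=> a u v Pu Pv; rewrite HL1 memvD // memvZ.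
move=> x xb.
have : y \in <<vbasis U>>%VS by rewrite (span_basis (vbasisP _)).
move: y {yU}; apply: span_ind.
- by rewrite br0r mem0v.
- by move=> a u v Pu Pv; rewrite HL2 memvD // memvZ.
by move=> y yb; apply: memv_span; apply: allpairs_f.
Qed.

Lemma spanbr_sub (U : {vspace V}) (W : {vspace V}) :
  (forall x y, y \in U -> br x y \in W) -> (spanbr U <= W)%VS.
Proof.
move=> H; apply/span_subvP => z /allpairsP [[p q] [/= _ qU ->]].
by apply: H; apply: vbasis_mem.
Qed.

Lemma lcsS k : (0 < k)%N -> lcs br k.+1 = spanbr (lcs br k).
Proof. by case: k => [|[|k]]. Qed.

Lemma lcs1 : lcs br 1 = fullv.
Proof. by []. Qed.

Lemma mem_lcs k x y : (0 < k)%N -> y \in lcs br k -> br x y \in lcs br k.+1.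
Proof. by move=> k0 yk; rewrite lcsS //; apply: mem_spanbr. Qed.

Lemma lcs_sub k : (0 < k)%N -> (lcs br k.+1 <= lcs br k)%VS.
Proof.
elim: k => [//|k IH] _; case: k IH => [|k] IH; first by rewrite subvf.
rewrite lcsS //; apply: spanbr_sub => x y yk.
by apply: mem_lcs => //; apply: (subvP (IH isT)).
Qed.

Lemma lcs_step k : (0 < k)%N -> lcs br k = lcs br k.+1 -> lcs br k.+1 = lcs br k.+2.
Proof. by move=> k0 H; rewrite (lcsS (k := k.+1)) // -H -lcsS. Qed.

End Basics.

Section Forms.
Variable R : realType.
Variable V : vectType R.
Variable g : V -> V -> V -> R.
Hypothesis Hg : form3 g.

Let H1 : forall a x y z w, g (a *: x + y) z w = a * g x z w + g y z w.
Proof. by case: Hg. Qed.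
Let H2 : forall a x y z w, g x (a *: y + z) w = a * g x y w + g x z w.
Proof. by case: Hg. Qed.
Let H3 : forall a x y z w, g x y (a *: z + w) = a * g x y z + g x y w.
Proof. by case: Hg. Qed.
Let H4 : forall x y, g x x y = 0 /\ g x y x = 0 /\ g y x x = 0.
Proof. by case: Hg. Qed.

Lemma g0l y z : g 0 y z = 0.
Proof. by have := H1 1 0 0 y z; rewrite scaler0 addr0 mul1r => /(congr1 (fun v => v - g 0 y z)); rewrite addrK subrr => <-. Qed.
Lemma g0m y z : g y 0 z = 0.
Proof. by have := H2 1 y 0 0 z; rewrite scaler0 addr0 mul1r => /(congr1 (fun v => v - g y 0 z)); rewrite addrK subrr => <-. Qed.
Lemma g0r y z : g y z 0 = 0.
Proof. by have := H3 1 y z 0 0; rewrite scaler0 addr0 mul1r => /(congr1 (fun v => v - g y z 0)); rewrite addrK subrr => <-. Qed.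
Lemma gDl x y z w : g (x + y) z w = g x z w + g y z w.
Proof. by have := H1 1 x y z w; rewrite scale1r mul1r. Qed.
Lemma gDm x y z w : g z (x + y) w = g z x w + g z y w.
Proof. by have := H2 1 z x y w; rewrite scale1r mul1r. Qed.
Lemma gDr x y z w : g z w (x + y) = g z w x + g z w y.
Proof. by have := H3 1 z w x y; rewrite scale1r mul1r. Qed.
Lemma gZl a x z w : g (a *: x) z w = a * g x z w.
Proof. by have := H1 a x 0 z w; rewrite addr0 g0l addr0. Qed.
Lemma gZm a x z w : g z (a *: x) w = a * g z x w.
Proof. by have := H2 a z x 0 w; rewrite addr0 g0m addr0. Qed.
Lemma gZr a x z w : g z w (a *: x) = a * g z w x.
Proof. by have := H3 a z w x 0; rewrite addr0 g0r addr0. Qed.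
Lemma gxxy x y : g x x y = 0. Proof. by case: (H4 x y). Qed.
Lemma gxyx x y : g x y x = 0. Proof. by case: (H4 x y) => _ []. Qed.
Lemma gyxx x y : g y x x = 0. Proof. by case: (H4 x y) => _ []. Qed.
Lemma gC12 x y z : g x y z = - g y x z.
Proof.
have := gxxy (x + y) z; rewrite gDl !gDm !gxxy add0r addr0 => /eqP.
by rewrite addr_eq0 => /eqP.
Qed.
Lemma gC23 x y z : g x y z = - g x z y.
Proof.
have := gyxx (y + z) x; rewrite gDm !gDr !gyxx add0r addr0 => /eqP.
by rewrite addr_eq0 => /eqP.
Qed.
Lemma gC13 x y z : g x y z = - g z y x.
Proof. by rewrite gC12 gC23 gC12 !opprK. Qed.
Lemma gNl x z w : g (- x) z w = - g x z w.
Proof. by rewrite -scaleN1r gZl mulN1r. Qed.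
Lemma gNm x z w : g z (- x) w = - g z x w.
Proof. by rewrite -scaleN1r gZm mulN1r. Qed.
Lemma gNr x z w : g z w (- x) = - g z w x.
Proof. by rewrite -scaleN1r gZr mulN1r. Qed.
End Forms.
Lemma iso_of_basis (R : realType) (V : vectType R) (br : V -> V -> V)
  (B : 'rV[R]_5 -> 'rV[R]_5 -> 'rV[R]_5) (X : 5.-tuple V) :
  \dim (fullv : {vspace V}) = 5%N -> free X ->
  (forall r r' : 'rV[R]_5, br (\sum_(i < 5) r 0 i *: X`_i) (\sum_(i < 5) r' 0 i *: X`_i)
              = \sum_(i < 5) B r r' 0 i *: X`_i) ->
  lie_iso br B.
Proof.
move=> d5 fX Hb.
pose h (r : 'rV[R]_5) := \sum_(i < 5) r 0 i *: X`_i.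
pose f (x : V) : 'rV[R]_5 := \row_(i < 5) coord X i x.
have spX : (<<X>> = fullv)%VS.
  apply/eqP; rewrite eqEdim subvf d5; move: fX; rewrite /free size_tuple => /eqP ->.
  by [].
have fK r : f (h r) = r by apply/rowP => i; rewrite mxE coord_sum_free.
have hK x : h (f x) = x.
  have : x \in <<X>>%VS by rewrite spX memvf.
  move/coord_span => {2}->; apply: eq_bigr => i _; by rewrite mxE.
exists f; split.
- by move=> a x y; apply/rowP => i; rewrite !mxE linearP.
- by exists h.
move=> x y; by rewrite -{1}(hK x) -{1}(hK y) Hb fK.
Qed.
Lemma sum5 (R : realType) (V : vectType R) (a b c d e : V) (r : 'I_5 -> R) :
  \sum_(i < 5) r i *: [tuple a; b; c; d; e]`_i =
  r 0 *: a + r 1 *: b + r 2 *: c + r 3 *: d + r 4 *: e.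
Proof.
rewrite !big_ord_recl big_ord0 addr0 /= !addrA.
have -> : lift ord0 ord0 = 1 :> 'I_5 by apply/val_inj.
have -> : lift ord0 (lift ord0 ord0) = 2 :> 'I_5 by apply/val_inj.
have -> : lift ord0 (lift ord0 (lift ord0 ord0)) = 3 :> 'I_5 by apply/val_inj.
by have -> : lift ord0 (lift ord0 (lift ord0 (lift ord0 ord0))) = 4 :> 'I_5 by apply/val_inj.
Qed.
Lemma g52E (R : realType) (r r' : 'rV[R]_5) (i : 'I_5) :
  g52_br r r' 0 i = [:: 0; 0; 0; r 0 0 * r' 0 1 - r 0 1 * r' 0 0; r 0 0 * r' 0 2 - r 0 2 * r' 0 0]`_i.
Proof.
rewrite !mxE.
by case: i => [[|[|[|[|[|i]]]]] Hi] //=; rewrite !(mulr0, mulr1, addr0, add0r).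
Qed.

Section G52.
Variable R : realType.
Variable V : vectType R.
Variable br : V -> V -> V.
Hypothesis HL : lie_algebra br.
Hypothesis d5 : \dim (fullv : {vspace V}) = 5%N.

Definition line (a z : V) := exists t : R, z = t *: a.

Lemma line_cap a b z : a != 0 -> ~ line a b -> line a z -> line b z -> z = 0.
Proof.
move=> a0 nab [s zs] [t zt].
have [t0|t0] := eqVneq t 0; first by rewrite zt t0 scale0r.
exfalso; apply: nab; exists (s / t).
by rewrite mulrC -scalerA -zs zt scalerA mulVf // scale1r.
Qed.

Lemma exists_wuv : (2 <= \dim (lcs br 2))%N ->
  exists w u v, br w u != 0 /\ ~ line (br w u) (br w v).
Proof.
move=> d2.
have [x [y a0]] : exists x y, br x y != 0.
  apply: NNPP => H; move: d2.
  suff -> : lcs br 2 = 0%VS by rewrite dimv0.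
  apply/eqP; rewrite -subv0 (@lcsS _ _ br 1 isT); apply: spanbr_sub => p q _.
  rewrite memv0; apply: NNPP => H'; apply: H; exists p, q; exact/negP.
set a := br x y in a0.
have [p [q nab]] : exists p q, ~ line a (br p q).
  apply: NNPP => H; move: d2.
  suff : (lcs br 2 <= <[a]>)%VS by move/dimvS; rewrite dim_vline a0 => H1 H2; have := leq_trans H2 H1.
  rewrite (@lcsS _ _ br 1 isT); apply: spanbr_sub => p q _.
  apply/vlineP; apply: NNPP => H'; apply: H; exists p, q => -[t Ht]; apply: H'; by exists t.
set b := br p q in nab.
apply: NNPP => H.
have H' w u v : br w u != 0 -> line (br w u) (br w v).
  move=> wu0; apply: NNPP => nl; apply: H; exists w, u, v; split => //.
have b0 : b != 0.
  apply/eqP => b0; apply: nab; exists 0; by rewrite b0 scale0r.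
have lineN c z : line (- c) z -> line c z.
  move=> [t Ht]; exists (- t); by rewrite Ht scalerN scaleNr.
have lineNz c z : line c (- z) -> line c z.
  move=> [t Ht]; exists (- t); by rewrite scaleNr -Ht opprK.
have yx0 : br y x != 0 by rewrite (brC HL) oppr_eq0.
have qp0 : br q p != 0 by rewrite (brC HL) oppr_eq0.
have py : br p y = 0.
  apply: (line_cap a0 nab).
  - apply: lineNz; rewrite (brC HL) opprK; apply: lineN; rewrite -(brC HL).
    exact: H' yx0.
  - exact: H' b0.
have xq : br x q = 0.
  apply: (line_cap a0 nab).
  - exact: H' a0.
  - apply: lineNz; rewrite (brC HL) opprK; apply: lineN; rewrite -(brC HL).
    exact: H' qp0.
have e1 : br (x + p) y = a by rewrite (brDl HL) py addr0.
have e2 : br (x + p) q = b by rewrite (brDl HL) xq add0r.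
have := H' (x + p) y q; rewrite e1 e2 => /(_ a0); exact: nab.
Qed.


Section Table.
Variables (w u v c1 c2 : V).
Hypotheses (Hwu : br w u = c1) (Hwv : br w v = c2) (Huv : br u v = 0).
Hypotheses (Hc1 : forall y, br y c1 = 0) (Hc2 : forall y, br y c2 = 0).

Let Hc1' y : br c1 y = 0. Proof. by rewrite (brC HL) Hc1 oppr0. Qed.
Let Hc2' y : br c2 y = 0. Proof. by rewrite (brC HL) Hc2 oppr0. Qed.
Let Huw : br u w = - c1. Proof. by rewrite (brC HL) Hwu. Qed.
Let Hvw : br v w = - c2. Proof. by rewrite (brC HL) Hwv. Qed.
Let Hvu : br v u = 0. Proof. by rewrite (brC HL) Huv oppr0. Qed.

Lemma table a0 a1 a2 a3 a4 b0 b1 b2 b3 b4 :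
  br (a0 *: w + a1 *: u + a2 *: v + a3 *: c1 + a4 *: c2)
     (b0 *: w + b1 *: u + b2 *: v + b3 *: c1 + b4 *: c2)
  = (a0 * b1 - a1 * b0) *: c1 + (a0 * b2 - a2 * b0) *: c2.
Proof.
rewrite !(brDl HL) !(brZl HL) !(brDr HL) !(brZr HL) !(brxx HL).
rewrite Hwu Hwv Huv Huw Hvw Hvu !Hc1 !Hc2 !Hc1' !Hc2' !scaler0 !addr0 !add0r.
rewrite !scalerDr !scalerN !scalerA !scalerBl.
by rewrite !scaler0 !addr0 addrACA !addrA.
Qed.
End Table.

Lemma ord5 (i : 'I_5) : i = 0 \/ i = 1 \/ i = 2 \/ i = 3 \/ i = 4.
Proof.
case: i => [[|[|[|[|[|i]]]]] Hi] //.
- by left; apply/val_inj.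
- by right; left; apply/val_inj.
- by right; right; left; apply/val_inj.
- by right; right; right; left; apply/val_inj.
- by right; right; right; right; apply/val_inj.
Qed.

Definition ind2 (c1 c2 : V) := forall s t : R, s *: c1 + t *: c2 = 0 -> s = 0 /\ t = 0.

Section Kill.
Variables (w u v c1 c2 : V).
Hypotheses (Hwu : br w u = c1) (Hwv : br w v = c2).
Hypotheses (Hc1 : forall y, br y c1 = 0) (Hc2 : forall y, br y c2 = 0).
Hypothesis Hind : ind2 c1 c2.

Lemma kill k0 k1 k2 k3 k4 z : (forall y, br y z = 0) ->
  k0 *: w + k1 *: u + k2 *: v + k3 *: c1 + k4 *: c2 = z ->
  [/\ k0 = 0, k1 = 0 & k2 = 0].
Proof.
move=> Hz E.
have E1 := congr1 (br w) E.
rewrite Hz !(brDr HL) !(brZr HL) (brxx HL) Hwu Hwv !Hc1 !Hc2 !scaler0 !addr0 add0r in E1.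
have [k10 k20] := Hind E1.
have E2 := congr1 (br u) E.
rewrite Hz !(brDr HL) !(brZr HL) (brxx HL) (brC HL u w) Hwu !Hc1 !Hc2 k20 !scaler0 scale0r !addr0 in E2.
have [k00 _] : k0 = 0 /\ (0:R) = 0.
  by apply: Hind; rewrite scale0r addr0; apply/eqP; rewrite -oppr_eq0 -scalerN E2.
by [].
Qed.

Lemma free5 : free [tuple w; u; v; c1; c2].
Proof.
apply/freeP => k; rewrite sum5 => E.
have [k0 k1 k2] := kill (fun y => br0r HL y) E.
rewrite k0 k1 k2 !scale0r !add0r in E.
have [k3 k4] := Hind E.
by move=> i; case: (ord5 i) => [->|[->|[->|[->|->]]]].
Qed.
End Kill.

Lemma span5 (X : 5.-tuple V) : free X -> (<<X>> = fullv)%VS.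
Proof.
move=> fX; apply/eqP; rewrite eqEdim subvf d5; move: fX; rewrite /free size_tuple => /eqP ->.
by [].
Qed.

Lemma g52_case : lcs br 3 = 0%VS -> (2 <= \dim (lcs br 2))%N -> lie_iso br (@g52_br R).
Proof.
move=> l3 d2; have [w [u [v [c10 nl]]]] := exists_wuv d2.
set c1 := br w u in c10 nl *; set c2 := br w v in nl *.
have cen z : z \in lcs br 2 -> forall y, br y z = 0.
  by move=> zl y; apply/eqP; rewrite -memv0 -l3; apply: (mem_lcs HL y (k := 2) isT zl).
have c1l : c1 \in lcs br 2 by apply: (mem_lcs HL w (k := 1) isT (memvf u)).
have c2l : c2 \in lcs br 2 by apply: (mem_lcs HL w (k := 1) isT (memvf v)).
have Hc1 := cen _ c1l; have Hc2 := cen _ c2l.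
have ind : ind2 c1 c2.
  move=> s t E; have [t0|t0] := eqVneq t 0.
    rewrite t0 scale0r addr0 in E; move/eqP: E; rewrite scaler_eq0 (negPf c10) orbF => /eqP.
    by [].
  exfalso; apply: nl; exists (- s / t); apply: (scalerI t0).
  rewrite scalerA mulrCA mulfV // mulr1 scaleNr; apply/eqP; by rewrite -addr_eq0 addrC E.
have fX0 := free5 (erefl c1) (erefl c2) Hc1 Hc2 ind.
have zl : br u v \in lcs br 2 by apply: (mem_lcs HL u (k := 1) isT (memvf v)).
have : br u v \in <<[tuple w; u; v; c1; c2]>>%VS by rewrite span5 // memvf.
move/coord_span; rewrite sum5 => /esym E.
have [k0 k1 k2] := kill (erefl c1) (erefl c2) Hc1 Hc2 ind (cen _ zl) E.
rewrite k0 k1 k2 !scale0r !add0r in E.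
set al := coord _ 3 _ in E; set be := coord _ 4 _ in E.
pose u' := u - be *: w; pose v' := v + al *: w.
have Hwu' : br w u' = c1 by rewrite (brBr HL) (brZr HL) (brxx HL) scaler0 subr0.
have Hwv' : br w v' = c2 by rewrite (brDr HL) (brZr HL) (brxx HL) scaler0 addr0.
have Huv' : br u' v' = 0.
  rewrite (brBl HL) !(brDr HL) !(brZr HL) !(brZl HL) (brxx HL) !scaler0 !addr0.
  rewrite (brC HL u w) -/c1 -/c2 scalerN -E.
  by rewrite addrAC addrK subrr.
have fX := free5 Hwu' Hwv' Hc1 Hc2 ind.
apply: (iso_of_basis d5 fX) => r r'.
rewrite !sum5 (table Hwu' Hwv' Huv' Hc1 Hc2).
rewrite !g52E /= !scale0r !add0r.
by [].
Qed.

End G52.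

Section Chain.
Variable R : realType.
Variable V : vectType R.
Variable br : V -> V -> V.
Hypothesis HL : lie_algebra br.
Hypothesis d5 : \dim (fullv : {vspace V}) = 5%N.

Lemma lcs_subn i j : (0 < i)%N -> (i <= j)%N -> (lcs br j <= lcs br i)%VS.
Proof.
move=> i0; elim: j => [|j IH]; first by rewrite leqn0 => /eqP i0'; move: i0; rewrite i0'.
rewrite leq_eqVlt => /orP [/eqP <-|]; first exact: subvv.
rewrite ltnS => ij; apply: subv_trans (IH ij).
by apply: (lcs_sub HL); exact: leq_trans i0 ij.
Qed.

Lemma lcs_const i t : (0 < i)%N -> lcs br i = lcs br i.+1 -> lcs br (i + t) = lcs br i.
Proof.
move=> i0 E.
have step : forall s, lcs br (i + s) = lcs br (i + s).+1.
  elim => [|s IH]; first by rewrite addn0.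
  rewrite addnS; apply: lcs_step => //; by rewrite addn_gt0 i0.
elim: t => [|t IH]; first by rewrite addn0.
by rewrite addnS -step.
Qed.

Variables (J : nat).
Hypotheses (J0 : (0 < J)%N) (lJ : lcs br J != 0%VS) (lJ1 : lcs br J.+1 = 0%VS).

Lemma lcs_strict i : (0 < i)%N -> (i <= J)%N -> lcs br i <> lcs br i.+1.
Proof.
move=> i0 iJ E; move/eqP: lJ; apply.
have := lcs_const (J.+1 - i) i0 E; rewrite subnKC; last by apply: leq_trans iJ _.
rewrite lJ1 => E0; apply/eqP; rewrite -subv0 E0.
exact: lcs_subn.
Qed.

Lemma dim_strict i : (0 < i)%N -> (i <= J)%N -> (\dim (lcs br i.+1) < \dim (lcs br i))%N.
Proof.
move=> i0 iJ; rewrite (ltn_leqif (dimv_leqif_sup (lcs_sub HL i0))).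
apply/negP => H; apply: (lcs_strict i0 iJ); apply/eqP; rewrite eqEsubv H /=.
exact: (lcs_sub HL).
Qed.

Lemma dim_chain d i : (0 < i)%N -> (i + d <= J)%N ->
  (\dim (lcs br (i + d)) + d <= \dim (lcs br i))%N.
Proof.
move=> i0; elim: d => [|d IH]; first by rewrite !addn0.
move=> idJ.
have h1 : (i + d <= J)%N by rewrite addnS in idJ; exact: ltnW.
have := IH h1.
have := dim_strict (i := i + d) (leq_trans i0 (leq_addr _ _)) h1.
have -> : (i + d.+1 = (i + d).+1)%N by rewrite addnS.
lia.
Qed.

End Chain.

Section Compl.
Variable R : realType.
Variable V : vectType R.
Hypothesis d5 : \dim (fullv : {vspace V}) = 5%N.

Lemma compl2 (U : {vspace V}) : (5 <= \dim U + 2)%N ->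
  exists w1 w2 : V, ((5 <= \dim U + 1)%N -> w2 = 0) /\
    forall x, exists u a b, u \in U /\ x = u + a *: w1 + b *: w2.
Proof.
move=> dU; pose s : seq V := vbasis (U^C)%VS.
have ss : size s = (5 - \dim U)%N by rewrite /s size_tuple dimv_compl d5.
exists s`_0, s`_1; split.
  by move=> dU1; rewrite nth_default // ss; lia.
move=> x; have : x \in (U + U^C)%VS by rewrite addv_complf memvf.
case/memv_addP => u uU [v vC ->].
suff [a [b ->]] : exists a b, v = a *: s`_0 + b *: s`_1.
  by exists u, a, b; rewrite addrA.
have : v \in <<s>>%VS by rewrite (span_basis (vbasisP _)).
move: v {vC}; apply: span_ind.
- by exists 0, 0; rewrite !scale0r !addr0.
- move=> a y z [a1 [b1 ->]] [a2 [b2 ->]].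
  exists (a * a1 + a2), (a * b1 + b2).
  rewrite scalerDr !scalerA !scalerDl.
  by rewrite addrACA.
- move=> y /(nthP 0) [i ilt <-].
  have : (i < 2)%N by move: ilt; rewrite ss; lia.
  case: i {ilt} => [|[|i]] // _.
  + by exists 1, 0; rewrite scale1r scale0r addr0.
  + by exists 0, 1; rewrite scale1r scale0r add0r.
Qed.
End Compl.

Lemma zh (T : zmodType) (X A P B Q : T) : X + (A + P) + (B - Q) - (P - Q) = X + A + B.
Proof.
by rewrite opprB addrA -(addrA _ (B - Q) Q) subrK (addrA X A P) (addrAC (X + A) P B) addrK.
Qed.

Section Main.
Variable R : realType.
Variable V : vectType R.
Variable br : V -> V -> V.
Hypothesis HL : lie_algebra br.
Hypothesis d5 : \dim (fullv : {vspace V}) = 5%N.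

Lemma br_l3r x u : u \in lcs br 2 -> br x u \in lcs br 3.
Proof. by move=> uL; apply: (mem_lcs HL x (k := 2) isT uL). Qed.
Lemma br_l3l x u : u \in lcs br 2 -> br u x \in lcs br 3.
Proof. by move=> uL; rewrite (brC HL) memvN br_l3r. Qed.

Lemma brmod w1 w2 u a b u' a' b' : u \in lcs br 2 -> u' \in lcs br 2 ->
  br (u + a *: w1 + b *: w2) (u' + a' *: w1 + b' *: w2)
    - (a * b' - b * a') *: br w1 w2 \in lcs br 3.
Proof.
move=> uL uL'.
rewrite !(brDl HL) !(brZl HL).
set Y := u' + a' *: w1 + b' *: w2.
have E1 : br w1 Y = br w1 u' + b' *: br w1 w2.
  by rewrite /Y !(brDr HL) !(brZr HL) (brxx HL) scaler0 addr0.
have E2 : br w2 Y = br w2 u' - a' *: br w1 w2.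
  by rewrite /Y !(brDr HL) !(brZr HL) (brxx HL) scaler0 addr0 (brC HL w2 w1) scalerN.
rewrite E1 E2 !scalerDr scalerN !scalerA scalerBl zh.
apply: memvD; first apply: memvD.
- exact: br_l3l.
- by apply: memvZ; apply: br_l3r.
- by apply: memvZ; apply: br_l3r.
Qed.

Variable g : V -> V -> V -> R.
Hypothesis Hg : cocycle3 br g.
Hypothesis Hadm : admissible br g.
Let Hg1 : form3 g. Proof. by case: Hg. Qed.
Let Hd : forall x0 x1 x2 x3, d3 br g x0 x1 x2 x3 = 0. Proof. by case: Hg. Qed.

Lemma adm_top j c : (0 < j)%N -> lcs br j.+1 = 0%VS -> c \in lcs br j ->
  (forall L X, X \in lcs br j -> g L c X = 0) -> c = 0.
Proof.
move=> j0 lj1 cL H.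
have := @Hadm j.-1 c; rewrite prednK //; apply => //.
- move=> y; apply/eqP; rewrite (brC HL) oppr_eq0 -memv0 -lj1; exact: (mem_lcs HL y (k := j) j0 cL).
- exists (fun _ => 0); split; first by move=> a x y; rewrite mulr0 addr0.
  move=> L X XL; exact: H.
Qed.

Lemma dim_top j : (0 < j)%N -> lcs br j.+1 = 0%VS -> lcs br j != 0%VS ->
  (2 <= \dim (lcs br j))%N.
Proof.
move=> j0 lj1 nz; rewrite leqNgt; apply/negP => d1.
have d1' : \dim (lcs br j) = 1%N by move: nz d1; rewrite -dimv_eq0; lia.
set s := vbasis (lcs br j).
have ss : size s = 1%N by rewrite size_tuple.
have Es : (s : seq V) = [:: s`_0] by move: ss; case: (s : seq V) => [|x [|y t]].
have [c E] : exists c, lcs br j = <[c]>%VS.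
  by exists s`_0; rewrite -span_seq1 -Es /s (span_basis (vbasisP (lcs br j))).
clear Es ss; clearbody s; clear s.
have c0 : c = 0.
  apply: (adm_top j0 lj1); first by rewrite E memv_line.
  move=> L X; rewrite E => /vlineP [t ->]; by rewrite (gZr Hg1) (gyxx Hg1) mulr0.
by move: d1'; rewrite E c0 dim_vline eqxx.
Qed.

Lemma j3_false : lcs br 4 = 0%VS -> lcs br 3 != 0%VS -> False.
Proof.
move=> l4 nz3.
have dd3 := dim_top (j := 3) isT l4 nz3.
have d2 : (3 <= \dim (lcs br 2))%N.
  have := dim_chain HL d5 (J := 3) isT nz3 l4 (d := 1) (i := 2) isT isT; rewrite (_ : (2 + 1 = 3)%N) //; lia.
have [w1 [w2 [_ dec]]] := compl2 d5 (U := lcs br 2) (ltac:(lia)).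
set W := br w1 w2.
set M := lcs br 3.
have cen c : c \in M -> forall y, br y c = 0 /\ br c y = 0.
  move=> cM y; have h : br y c = 0.
    by apply/eqP; rewrite -memv0 -l4; exact: (mem_lcs HL y (k := 3) isT cM).
  by split => //; rewrite (brC HL) h oppr0.
have ML2 : (M <= lcs br 2)%VS := lcs_sub HL (k := 2) isT.
have WL : W \in lcs br 2 := mem_lcs HL w1 (k := 1) isT (memvf w2).
have brdec p q : exists t m, m \in M /\ br p q = t *: W + m.
  have [u [a [b [uL ->]]]] := dec p; have [u' [a' [b' [uL' ->]]]] := dec q.
  have H := brmod w1 w2 a b a' b' uL uL'.
  by exists (a * b' - b * a'); eexists; split; first exact: H; rewrite [RHS]addrC subrK.
have l2dec y : y \in lcs br 2 -> exists t m, m \in M /\ y = t *: W + m.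
  rewrite (@lcsS _ _ br 1 isT) /spanbr; move: y; apply: span_ind.
  - by exists 0, 0; rewrite mem0v scale0r addr0.
  - move=> a y z [t1 [m1 [m1M ->]]] [t2 [m2 [m2M ->]]].
    exists (a * t1 + t2), (a *: m1 + m2); split; first by rewrite memvD // memvZ.
    by rewrite scalerDr scalerA scalerDl addrACA.
  - by move=> z /allpairsP [[p q] [_ _ ->]]; apply: brdec.
have G1 y c c' : y \in lcs br 2 -> c \in M -> c' \in M -> g y c c' = 0.
  move=> yL cM c'M; move: y yL; rewrite (@lcsS _ _ br 1 isT) /spanbr; apply: span_ind.
  - exact: (g0l Hg1).
  - by move=> a y z Py Pz; rewrite (gDl Hg1) (gZl Hg1) Py Pz mulr0 addr0.
  move=> z /allpairsP [[p q] [_ _ ->]] /=.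
  have := Hd p q c c'; rewrite /d3.
  have hc y := proj1 (cen c cM y); have hc' y := proj1 (cen c' c'M y).
  have hcc y := proj2 (cen c cM y).
  rewrite !hc !hc' !(g0l Hg1) !subr0 !addr0 => /eqP; rewrite oppr_eq0 => /eqP.
  by [].
have G2 y y' c : y \in lcs br 2 -> y' \in lcs br 2 -> c \in M -> g y y' c = 0.
  move=> yL y'L cM.
  have [t [m [mM ->]]] := l2dec y yL; have [t' [m' [m'M ->]]] := l2dec y' y'L.
  have mL : m \in lcs br 2 by apply: (subvP ML2).
  rewrite !(gDl Hg1) !(gDm Hg1) !(gZl Hg1) !(gZm Hg1) (gxxy Hg1).
  rewrite (G1 W m' c) // (gC12 Hg1 m W c) (G1 W m c) // (G1 m m' c) //.
  by rewrite !(mulr0, oppr0, addr0).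
have G3 p q y : y \in lcs br 2 -> g (br p y) q (br q y) = 0.
  move=> yL; set c := br q y.
  have cM : c \in M by apply: br_l3r.
  have := Hd p y q c; rewrite /d3.
  have hc z := proj1 (cen c cM z).
  have pqL : br p q \in lcs br 2 := mem_lcs HL p (k := 1) isT (memvf q).
  rewrite !hc !(g0l Hg1) (G2 (br p q) y c) // (brC HL y q) -/c (gNl Hg1) (gxyx Hg1).
  by rewrite !(oppr0, subr0, addr0) => /eqP; rewrite oppr_eq0 => /eqP.
pose p1 := br w1 W; pose p2 := br w2 W.
have phidec x : exists a b, br x W = a *: p1 + b *: p2.
  have [u [a [b [uL ->]]]] := dec x.
  have [t [m [mM ->]]] := l2dec u uL.
  exists a, b; rewrite !(brDl HL) !(brZl HL) (brxx HL) (proj2 (cen m mM W)).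
  by rewrite scaler0 !add0r.
have Mdec c : c \in M -> exists a b, c = a *: p1 + b *: p2.
  rewrite /M (@lcsS _ _ br 2 isT) /spanbr; move: c; apply: span_ind.
  - by exists 0, 0; rewrite !scale0r addr0.
  - move=> a y z [a1 [b1 ->]] [a2 [b2 ->]].
    exists (a * a1 + a2), (a * b1 + b2).
    by rewrite scalerDr !scalerA !scalerDl addrACA.
  move=> z /allpairsP [[p y] [_ /= yb ->]].
  have [t [m [mM ->]]] := l2dec y (vbasis_mem yb).
  have [a [b E]] := phidec p.
  exists (t * a), (t * b).
  by rewrite (brDr HL) (brZr HL) (proj1 (cen m mM p)) addr0 E scalerDr !scalerA.
have p1M : p1 \in M by apply: br_l3r.
have p2M : p2 \in M by apply: br_l3r.
have gphi L : g L p1 p2 = 0.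
  have [u [a [b [uL ->]]]] := dec L.
  rewrite !(gDl Hg1) !(gZl Hg1) (G1 u p1 p2) //.
  have h1 := G3 w2 w1 W WL; rewrite -/p1 -/p2 (gC13 Hg1) (gC12 Hg1) opprK in h1.
  have h2 := G3 w1 w2 W WL; rewrite -/p1 -/p2 (gC12 Hg1) in h2.
  move/eqP: h2; rewrite oppr_eq0 => /eqP h2.
  by rewrite h1 h2 !mulr0 !addr0.
have gM L c c' : c \in M -> c' \in M -> g L c c' = 0.
  move=> /Mdec [a [b ->]] /Mdec [a' [b' ->]].
  rewrite !(gDm Hg1) !(gZm Hg1) !(gDr Hg1) !(gZr Hg1) !(gyxx Hg1) (gC23 Hg1 L p2 p1) gphi.
  by rewrite !(oppr0, mulr0, addr0).
move/negP: nz3; apply; rewrite -subv0; apply/subvP => c cM; rewrite memv0; apply/eqP.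
apply: (adm_top (j := 3) isT l4 cM) => L X XM; exact: gM.
Qed.



Lemma j4_false J : (4 <= J)%N -> lcs br J != 0%VS -> lcs br J.+1 = 0%VS -> False.
Proof.
move=> J4 nzJ lJ1.
have J0 : (0 < J)%N by lia.
have dJ := dim_top J0 lJ1 nzJ.
have d2 : (4 <= \dim (lcs br 2))%N.
  have := dim_chain HL d5 J0 nzJ lJ1 (d := J - 2) (i := 2) isT (ltac:(lia)).
  rewrite subnKC; last by lia.
  lia.
have [w1 [w2 [w20 dec]]] := compl2 d5 (U := lcs br 2) (ltac:(lia)).
have {}w20 := w20 (ltac:(lia)).
have sub : (lcs br 2 <= lcs br 3)%VS.
  rewrite (@lcsS _ _ br 1 isT); apply: spanbr_sub => x y _.
  have [u [a [b [uL ->]]]] := dec x; have [u' [a' [b' [uL' ->]]]] := dec y.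
  have := brmod w1 w2 a b a' b' uL uL'.
  by rewrite w20 !(br0r HL, scaler0, addr0, subr0).
apply: (lcs_strict HL nzJ lJ1 (i := 2) isT (ltac:(lia))).
apply/eqP; rewrite eqEsubv sub /=.
exact: (lcs_sub HL (k := 2) isT).
Qed.

Lemma lcs_top : nilpotent br -> exists J, [/\ (0 < J)%N, lcs br J != 0%VS & lcs br J.+1 = 0%VS].
Proof.
case=> n Hn; apply: NNPP => H.
have fz : (fullv : {vspace V}) != 0%VS by rewrite -dimv_eq0 d5.
have all k : lcs br k.+1 != 0%VS.
  elim: k => [|k IH]; first exact: fz.
  apply/negP => /eqP E; apply: H; exists k.+1; split => //.
case: n Hn => [|n] Hn; first by move/eqP: fz.
by move/eqP: (all n).
Qed.

Lemma abelian_case : lcs br 2 = 0%VS -> lie_iso br (@abelian5_br R).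
Proof.
move=> l2.
have br0 x y : br x y = 0.
  by apply/eqP; rewrite -memv0 -l2; exact: (mem_lcs HL x (k := 1) isT (memvf y)).
pose X := tcast d5 (vbasis (fullv : {vspace V})).
have fX : free X by rewrite /X val_tcast; exact: basis_free (vbasisP _).
apply: (iso_of_basis d5 fX) => r r'.
rewrite br0 /abelian5_br big1 // => i _; by rewrite mxE scale0r.
Qed.

End Main.

Theorem proposition4 (R : realType) (V : vectType R) (br : V -> V -> V) :
  lie_algebra br ->
  \dim (fullv : {vspace V}) = 5%N ->
  nilpotent br ->
  (exists g : V -> V -> V -> R,
      cocycle3 br g /\ admissible br g /\ ~ decomposable br g) ->
  lie_iso br (@abelian5_br R) \/ lie_iso br (@g52_br R).
Proof.
move=> HL d5 Hn [g [Hg [Hadm _]]].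
have [J [J0 nzJ lJ1]] := lcs_top d5 Hn.
case: J J0 nzJ lJ1 => [//|[|[|[|J]]]] _ nzJ lJ1.
- by left; apply: abelian_case.
- right; apply: (g52_case HL d5 lJ1).
  exact: (dim_top HL d5 Hg Hadm (j := 2) isT lJ1 nzJ).
- by case: (j3_false HL d5 Hg Hadm lJ1 nzJ).
- by case: (j4_false HL d5 Hg Hadm (J := J.+4) isT nzJ lJ1).
Qed.
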